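(* Let $\Omega\subset\mathbb{R}^n$ be a nonempty closed convex set and $f:\mathbb{R}^n\to\mathbb{R}$ differentiable over $\Omega$ such that (i) $f(\bm{x})\ge\underline{f}$ for all $\bm{x}\in\Omega$, (ii) $\|\nabla f(\bm{x})-\nabla f(\bm{y})\|_2\le L\|\bm{x}-\bm{y}\|_2$ for all $\bm{x},\bm{y}\in\Omega$ for some $L>0$, and (iii) the relaxation sequence $\{\omega_k\}\subset[0,\infty)$ satisfies $\sum_{k=0}^\infty\omega_k<\infty$. Suppose $\{\bm{x}_k\}$ is generated by either IGPM without line search or IGPM with line search (described in the context). Then every limit point $\bm{x}^*$ of $\{\bm{x}_k\}$ is a first-order optimal solution of $\min_{\bm{x}\in\Omega}f(\bm{x})$, i.e., $\bm{x}^*=\mathcal{P}_\Omega(\bm{x}^*-\beta\nabla f(\bm{x}^* ))$ (equivalently $-\nabla f(\bm{x}^* )\in\mathcal{N}(\bm{x}^*|\Omega)$).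
   Context: $\mathcal{P}_\Omega$ is Euclidean projection onto $\Omega$ and $\mathcal{N}(\bm{x}|\Omega)$ the normal cone. For $\bm{x}_k\in\Omega$ write $\bm{g}_k=\nabla f(\bm{x}_k)$, $\bm{v}_k=\bm{x}_k-\beta\bm{g}_k$ for a fixed $\beta>0$, and define $p(\bm{z};\bm{x}_k)=\tfrac12\|\bm{z}-\bm{v}_k\|_2^2+\delta_\Omega(\bm{z})$ ($\delta_\Omega$ the $0/+\infty$ indicator of $\Omega$), $\Delta p(\bm{z};\bm{x}_k)=p(\bm{x}_k;\bm{x}_k)-p(\bm{z};\bm{x}_k)$, and $q(\bm{u};\bm{x}_k)=-\tfrac12\|\bm{u}-\bm{v}_k\|_2^2-\delta_\Omega^*(\bm{u})+\tfrac12\|\bm{v}_k\|_2^2$ with $\delta^*_\Omega(\bm{u})=\sup_{\bm{x}\in\Omega}\langle\bm{x},\bm{u}\rangle$. An inexact projection at iteration $k$ is a point $\bm{z}_k\in\Omega$ with $\Delta p(\bm{z}_k;\bm{x}_k)\ge0$ together with some dual point $\bm{u}_k$ such that $\frac{p(\bm{x}_k;\bm{x}_k)-p(\bm{z}_k;\bm{x}_k)+\omega_k}{p(\bm{x}_k;\bm{x}_k)-q(\bm{u}_k;\bm{x}_k)+\omega_k}\ge\gamma$, where $0<\gamma<1$. IGPM without line search: $0<\beta\le1/L$, $\bm{x}_0\in\Omega$, and $\bm{x}_{k+1}=\bm{z}_k$ for all $k$. IGPM with line search: fix $0<\eta<1$, $0<\alpha\le1$, $\beta>0$, $0<\theta<1$,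 $\bm{x}_0\in\Omega$; set $\bm{d}_k=\bm{z}_k-\bm{x}_k$, let $\alpha_k$ be the largest value in $\{\theta^i\alpha: i=0,1,2,\dots\}$ with $f(\bm{x}_k+\alpha_k\bm{d}_k)\le f(\bm{x}_k)+\eta\alpha_k\bm{g}_k^T\bm{d}_k$, and set $\bm{x}_{k+1}=\bm{x}_k+\alpha_k\bm{d}_k$. The algorithms are considered as generating infinite sequences. *)

(* Defs.v *)
From HB Require Import structures.
From mathcomp Require Import all_boot all_order all_algebra.
From mathcomp Require Import all_classical all_reals all_analysis.
Set Implicit Arguments. Unset Strict Implicit. Unset Printing Implicit Defensive.
Import Order.TTheory GRing.Theory Num.Theory.
Import numFieldNormedType.Exports.
Local Open Scope classical_set_scope.
Local Open Scope ring_scope.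

Section IGPM.
Variables (R : realType) (n : nat).
Notation vec := 'rV[R]_n.

Definition dotv (u v : vec) : R := \sum_(i < n) u 0 i * v 0 i.
Definition norm2 (u : vec) : R := Num.sqrt (dotv u u).

Definition convexR (Om : set vec) : Prop :=
  convex_set (Om : set (convex_lmodType vec)).

Definition grad (f : vec -> R) (x : vec) : vec :=
  \row_(i < n) ('d f x (delta_mx 0 i : vec)).

Definition is_proj (Om : set vec) (v z : vec) : Prop :=
  Om z /\ forall y, Om y -> norm2 (z - v) <= norm2 (y - v).

Definition indic (Om : set vec) (z : vec) : \bar R :=
  if `[< Om z >] then 0%E else +oo%E.

Definition supp (Om : set vec) (u : vec) : \bar R :=
  ereal_sup [set (dotv y u)%:E | y in Om].

Definition vk (f : vec -> R) (beta : R) (xk : vec) : vec := xk - beta *: grad f xk.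

Definition pk (Om : set vec) (f : vec -> R) (beta : R) (xk z : vec) : \bar R :=
  ((norm2 (z - vk f beta xk)) ^+ 2 / 2)%:E + indic Om z.

Definition qk (Om : set vec) (f : vec -> R) (beta : R) (xk u : vec) : \bar R :=
  ((- ((norm2 (u - vk f beta xk)) ^+ 2 / 2))%:E - supp Om u
     + ((norm2 (vk f beta xk)) ^+ 2 / 2)%:E)%E.

Definition dpk (Om : set vec) (f : vec -> R) (beta : R) (xk z : vec) : \bar R :=
  (pk Om f beta xk xk - pk Om f beta xk z)%E.

(* z_k (with dual point u_k) is an inexact projection at iteration k:
   z_k in Om, Delta p(z_k;x_k) >= 0 and
   (p(x_k) - p(z_k) + w_k) / (p(x_k) - q(u_k) + w_k) >= gamma,
   the ratio condition being written multiplied out (denominator >= 0). *)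
Definition inexact_proj (Om : set vec) (f : vec -> R) (beta gamma wk : R)
    (xk zk uk : vec) : Prop :=
  [/\ Om zk, (0 <= dpk Om f beta xk zk)%E &
      (gamma%:E * (pk Om f beta xk xk - qk Om f beta xk uk + wk%:E)
        <= pk Om f beta xk xk - pk Om f beta xk zk + wk%:E)%E].

Definition igpm_noLS (Om : set vec) (f : vec -> R) (L beta gamma : R)
    (w : nat -> R) (x z u : nat -> vec) : Prop :=
  [/\ 0 < beta <= 1 / L, Om (x 0%N),
      forall k, inexact_proj Om f beta gamma (w k) (x k) (z k) (u k) &
      forall k, x k.+1 = z k].

Definition armijo (f : vec -> R) (eta : R) (xk zk : vec) (a : R) : Prop :=
  f (xk + a *: (zk - xk)) <= f xk + eta * a * dotv (grad f xk) (zk - xk).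

Definition igpm_LS (Om : set vec) (f : vec -> R) (eta alpha beta theta gamma : R)
    (w : nat -> R) (x z u : nat -> vec) (ak : nat -> R) : Prop :=
  [/\ 0 < eta < 1, 0 < alpha <= 1, 0 < beta & 0 < theta < 1] /\
  [/\ Om (x 0%N),
      forall k, inexact_proj Om f beta gamma (w k) (x k) (z k) (u k),
      forall k, [/\ exists i : nat, ak k = theta ^+ i * alpha,
                    armijo f eta (x k) (z k) (ak k) &
                    forall i : nat, armijo f eta (x k) (z k) (theta ^+ i * alpha) ->
                                    theta ^+ i * alpha <= ak k] &
      forall k, x k.+1 = x k + ak k *: (z k - x k)].

End IGPM.

(* Main.v *)
Require Import Defs.
From HB Require Import structures.
From mathcomp Require Import all_boot all_order all_algebra.
From mathcomp Require Import all_classical all_reals all_analysis.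
From mathcomp Require Import ring lra.
Set Implicit Arguments. Unset Strict Implicit. Unset Printing Implicit Defensive.
Import Order.TTheory GRing.Theory Num.Theory.
Import numFieldNormedType.Exports.
Local Open Scope classical_set_scope.
Local Open Scope ring_scope.

Section Alg.
Variables (R : realType) (n : nat).
Notation vec := 'rV[R]_n.

Lemma dotv_ge0 (u : vec) : 0 <= dotv u u.
Proof. by apply: sumr_ge0 => i _; rewrite -expr2 sqr_ge0. Qed.

Lemma norm2_sq (u : vec) : norm2 u ^+ 2 = dotv u u.
Proof. by rewrite /norm2 sqr_sqrtr // dotv_ge0. Qed.

Lemma norm2_ge0 (u : vec) : 0 <= norm2 u.
Proof. exact: sqrtr_ge0. Qed.

Lemma norm2_le_sq (a b : vec) : (norm2 a <= norm2 b) = (dotv a a <= dotv b b).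
Proof. by rewrite -!norm2_sq ler_sqr // ?nnegrE norm2_ge0. Qed.

Lemma young (a d : vec) (l : R) : 0 < l ->
  2 * dotv a d <= dotv a a / l + l * dotv d d.
Proof.
move=> l0; rewrite /dotv mulr_sumr mulr_suml mulr_sumr -big_split /=.
apply: ler_sum => i _.
have -> : a 0 i * a 0 i / l + l * (d 0 i * d 0 i) =
   2 * (a 0 i * d 0 i) + (a 0 i - l * d 0 i) ^+ 2 / l.
  by field; rewrite gt_eqF.
by rewrite lerDl divr_ge0 // ?sqr_ge0 // ltW.
Qed.

Lemma diff_grad (f : vec -> R) (y d : vec) : 'd f y d = dotv (grad f y) d.
Proof.
rewrite {1}(row_sum_delta d) linear_sum /dotv; apply: eq_bigr => i _.
by rewrite linearZ /= mxE mulrC.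
Qed.

Lemma seg_derive (f : vec -> R) (x d : vec) (s : R) :
  differentiable f (x + s *: d) ->
  is_derive s 1 (fun s => f (x + s *: d)) (dotv (grad f (x + s *: d)) d).
Proof.
move=> df.
have E : (fun h : R => h^-1 *: (((fun s => f (x + s *: d)) \o shift s) (h *: 1)
            - f (x + s *: d))) =
         (fun h : R => h^-1 *: ((f \o shift (x + s *: d)) (h *: d) - f (x + s *: d))).
  apply/funext => h /=; congr (_ *: (f _ - _)).
  by rewrite [h%:A]mulr1 scalerDl addrCA addrC.
rewrite -diff_grad -deriveE //.
apply: DeriveDef.
  by rewrite /derivable E; exact: diff_derivable.
by rewrite /derive E.
Qed.

Lemma phi_derive (f : vec -> R) (x d : vec) (c K s : R) :
  differentiable f (x + s *: d) ->
  is_derive s 1 (fun s => f (x + s *: d) - c * s - K * (s * s))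
    (dotv (grad f (x + s *: d)) d - c - K * (s + s)).
Proof.
move=> df.
have h1 := seg_derive df.
have hid : is_derive s (1:R) (@id R) 1 by exact: is_derive_id.
have h2 : is_derive s (1:R) (c \*: (@id R)) (c *: 1) := is_deriveZ c hid.
have h4 : is_derive s (1:R) ((@id R) * (@id R)) (id s *: 1 + id s *: 1) := is_deriveM hid hid.
have h3 := is_deriveZ K h4.
have h5 := is_deriveB (is_deriveB h1 h2) h3.
have E : (fun s => f (x + s *: d) - c * s - K * (s * s)) =
  ((fun s => f (x + s *: d)) - c \*: (@id R) - K \*: ((@id R) * (@id R))).
  by apply/funext => t.
rewrite E.
have V : dotv (grad f (x + s *: d)) d - c - K * (s + s) =
   dotv (grad f (x + s *: d)) d - c%:A - K *: (s%:A + s%:A).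
  by rewrite /GRing.scale /= !mulr1.
rewrite V; exact: h5.
Qed.
Lemma eqle (a b : R) : a = b -> a <= b.
Proof. by move->. Qed.

Lemma dotvBl (a b d : vec) : dotv (a - b) d = dotv a d - dotv b d.
Proof. by rewrite /dotv -sumrB; apply: eq_bigr => i _; rewrite !mxE mulrBl. Qed.

Lemma dotvZZ (s : R) (d : vec) : dotv (s *: d) (s *: d) = s ^+ 2 * dotv d d.
Proof. by rewrite /dotv mulr_sumr; apply: eq_bigr => i _; rewrite !mxE; ring. Qed.

Lemma lip_sq (a b : vec) (L : R) : 0 <= L -> norm2 a <= L * norm2 b ->
  dotv a a <= L ^+ 2 * dotv b b.
Proof.
move=> L0 h; rewrite -!norm2_sq -exprMn ler_sqr ?nnegrE ?norm2_ge0 ?mulr_ge0 ?norm2_ge0 //.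
Qed.

Lemma convex_seg (Om : set vec) x y (t : R) :
  convexR Om -> Om x -> Om y -> 0 <= t <= 1 -> Om (x + t *: (y - x)).
Proof.
move=> cO Ox Oy /andP[t0 t1].
have P : Itv.spec (@Itv.num_sem R) (Itv.Real `[0%Z, 1%Z]) t.
  rewrite /Itv.spec /=. apply/and3P; split => //=; rewrite ?num_real //=.
pose l : {i01 R} := Itv.mk P.
have := cO y x l.
rewrite !inE => /(_ Oy Ox).
congr Om.
change (t *: y + (1 - t) *: x = x + t *: (y - x)).
by rewrite scalerBl scale1r scalerBr addrCA.
Qed.

Lemma descent (Om : set vec) (f : vec -> R) (L : R) (x y : vec) (t : R) :
  convexR Om -> Om x -> Om y -> (forall y, Om y -> differentiable f y) -> 0 < L ->
  (forall y1 y2, Om y1 -> Om y2 ->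
     norm2 (grad f y1 - grad f y2) <= L * norm2 (y1 - y2)) ->
  0 <= t <= 1 ->
  f (x + t *: (y - x)) <= f x + t * dotv (grad f x) (y - x)
                          + L / 2 * (t * t) * dotv (y - x) (y - x).
Proof.
move=> cO Ox Oy dF L0 lip /andP[t0 t1].
set d := y - x; set c := dotv (grad f x) d; set K := L / 2 * dotv d d.
pose phi := fun s => f (x + s *: d) - c * s - K * (s * s).
have Oseg s : 0 <= s <= t -> Om (x + s *: d).
  move=> /andP[s0 st]; apply: convex_seg => //; rewrite s0 /=; exact: le_trans st t1.
have Dphi s : 0 <= s <= t -> is_derive s 1 phi
    (dotv (grad f (x + s *: d)) d - c - K * (s + s)).
  by move=> hs; apply: phi_derive; apply: dF; apply: Oseg.
suff : phi t <= phi 0.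
  rewrite /phi scale0r addr0 !mul0r mulr0 !subr0 => h; rewrite /K in h; lra.
apply: (@ler0_derive1_le_cc R phi 0 t).
- move=> s; rewrite in_itv /= => /andP[s0 st].
  have hs : 0 <= s <= t by rewrite !ltW.
  by have [] := Dphi s hs.
- move=> s; rewrite in_itv /= => /andP[s0 st].
  have hs : 0 <= s <= t by rewrite !ltW.
  rewrite derive1E; have [_ ->] := Dphi s hs.
  rewrite /c -dotvBl subr_le0.
  have ha : dotv (grad f (x + s *: d) - grad f x) (grad f (x + s *: d) - grad f x)
     <= L ^+ 2 * dotv (s *: d) (s *: d).
    have e : x + s *: d - x = s *: d by rewrite [x + _]addrC addrK.
    have hl := lip _ _ (Oseg s hs) Ox; rewrite e in hl.
    exact: lip_sq (ltW L0) hl.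
  rewrite dotvZZ in ha.
  have Ls : 0 < L * s by rewrite mulr_gt0.
  have hy := young (grad f (x + s *: d) - grad f x) d Ls.
  move: ha hy; rewrite /K.
  move: (dotv _ d) (dotv _ (_ - _)) (dotv d d) => P A N ha hy.
  have hb : A / (L * s) <= L * s * N.
    by rewrite ler_pdivrMr //; apply: (le_trans ha); apply: eqle; ring.
  have h2 : 2 * P <= 2 * (L * s * N).
    apply: (le_trans hy).
    have -> : 2 * (L * s * N) = L * s * N + L * s * N by ring.
    by rewrite lerD2r.
  by rewrite ler_pM2l // in h2; apply: (le_trans h2); apply: eqle; field.
- have hd : {in `[0, t]%R, forall r, derivable phi r 1}.
    by move=> r; rewrite in_itv /= => hr; have [] := Dphi r hr.
  exact: (derivable_within_continuous hd).
- by rewrite in_itv /= lexx t0.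
- by rewrite in_itv /= lexx t0.
- exact: t0.
Qed.
End Alg.

Lemma wbound (R : realType) (w : nat -> R) :
  (forall k, 0 <= w k) -> (\sum_(k <oo) (w k)%:E < +oo)%E ->
  exists W : R, forall N, \sum_(k < N) w k <= W.
Proof.
move=> w0 wfin.
have S0 : (0 <= \sum_(k <oo) (w k)%:E)%E by apply: nneseries_ge0 => k _ _; rewrite lee_fin.
exists (fine (\sum_(k <oo) (w k)%:E)) => N.
rewrite -lee_fin fineK; last by rewrite ge0_fin_numE.
have := @nneseries_lim_ge R (fun k => (w k)%:E) xpredT 0%N N (fun k _ _ => w0 k).
rewrite big_mkord -sumEFin //.
Qed.

Lemma bounded_sum_cvg0 (R : realType) (B : nat -> R) (M : R) :
  (forall k, 0 <= B k) -> (forall N, \sum_(k < N) B k <= M) -> B @ \oo --> 0.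
Proof.
move=> B0 BM; apply: cvg_series_cvg_0.
apply: nondecreasing_is_cvgn.
  apply/nondecreasing_seqP => k; rewrite /series /= big_nat_recr //= lerDl.
  exact: B0.
exists M => _ [N _ <-]; rewrite /series /= big_mkord; exact: BM.
Qed.

Section E.
Variables (R : realType) (n : nat).
Notation vec := 'rV[R]_n.
Variables (Om : set vec) (f : vec -> R) (beta : R).

Definition P0 (x z : vec) : R := dotv (z - vk f beta x) (z - vk f beta x) / 2.

Lemma pk_in (x z : vec) : Om z -> pk Om f beta x z = (P0 x z)%:E.
Proof.
by move=> Oz; rewrite /pk /Defs.indic (asboolT Oz) adde0 norm2_sq.
Qed.

Lemma weak_dual (y u v : vec) :
  - (dotv (u - v) (u - v) / 2) - dotv y u + dotv v v / 2 <= dotv (y - v) (y - v) / 2.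
Proof.
rewrite /dotv !mulr_suml -sumrN -!sumrB -big_split /=; apply: ler_sum => i _.
rewrite !mxE.
set a := y 0 i; set b := u 0 i; set c := v 0 i.
have -> : - ((b - c) * (b - c) / 2) - a * b + c * c / 2 =
   (a - c) * (a - c) / 2 - (a - c + b) ^+ 2 / 2 by field.
by rewrite lerBlDr lerDl divr_ge0 // sqr_ge0.
Qed.

Lemma qk_le (x u y : vec) : Om y -> (qk Om f beta x u <= (P0 x y)%:E)%E.
Proof.
move=> Oy.
have hs : ((dotv y u)%:E <= supp Om u)%E by apply: ereal_sup_ubound; exists y.
rewrite /qk; move: hs; case: (supp Om u) => [r| |] hs.
- rewrite lee_fin in hs.
  rewrite -EFinB -EFinD lee_fin !norm2_sq.
  have := weak_dual y u (vk f beta x); rewrite /P0; lra.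
- by rewrite /= leNye.
- by move: hs; rewrite leeNy_eq.
Qed.

Lemma ip_facts (gamma wk : R) (x z u : vec) : Om x -> 0 <= gamma ->
  inexact_proj Om f beta gamma wk x z u ->
  [/\ Om z, 0 <= P0 x x - P0 x z &
      forall y, Om y -> gamma * (P0 x x - P0 x y + wk) <= P0 x x - P0 x z + wk].
Proof.
move=> Ox g0 [Oz hd hr]; split => //.
  by move: hd; rewrite /dpk !pk_in // -EFinB lee_fin.
move=> y Oy; move: hr; rewrite !pk_in // => hr.
have h1 : (gamma%:E * ((P0 x x)%:E - (P0 x y)%:E + wk%:E) <=
          gamma%:E * ((P0 x x)%:E - qk Om f beta x u + wk%:E))%E.
  apply: lee_wpmul2l; first by rewrite lee_fin.
  apply: leeD2r; apply: leeB => //; exact: qk_le.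
have := le_trans h1 hr.
by rewrite -EFinB -!EFinD -EFinM lee_fin.
Qed.

End E.

Section C.
Variables (R : realType) (n : nat).
Notation vec := 'rV[R]_n.

Lemma cvg_bigsum (I : Type) (s : seq I) (F : I -> nat -> R) (l : I -> R) :
  (forall i, F i @ \oo --> l i) ->
  (fun k => \sum_(i <- s) F i k) @ \oo --> \sum_(i <- s) l i.
Proof.
move=> hF; elim: s => [|a s IH].
  rewrite big_nil; under eq_fun do rewrite big_nil; exact: cvg_cst.
rewrite big_cons; under eq_fun do rewrite big_cons.
exact: cvgD.
Qed.

Lemma coord_cvg (y : nat -> vec) (ys : vec) i :
  y @ \oo --> ys -> (fun k => y k 0 i) @ \oo --> ys 0 i.
Proof.
move=> hy; apply: (cvg_comp y (fun M : vec => M 0 i) hy).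
exact: coord_continuous.
Qed.

Lemma dotv_cvg (a b : nat -> vec) (A B : vec) :
  (forall i, (fun k => a k 0 i) @ \oo --> A 0 i) ->
  (forall i, (fun k => b k 0 i) @ \oo --> B 0 i) ->
  (fun k => dotv (a k) (b k)) @ \oo --> dotv A B.
Proof.
move=> ha hb; rewrite /dotv.
have := @cvg_bigsum 'I_n (index_enum 'I_n) (fun i k => a k 0 i * b k 0 i)
  (fun i => A 0 i * B 0 i) (fun i => cvgM (ha i) (hb i)).
by apply; exact: _.
Qed.

Lemma coord_le_norm2 (a : vec) i : `|a 0 i| <= norm2 a.
Proof.
rewrite -ler_sqr ?nnegrE ?norm2_ge0 // norm2_sq real_normK ?num_real // expr2 /dotv.
rewrite (bigD1 i) //= lerDl; apply: sumr_ge0 => j _; rewrite -expr2 sqr_ge0 //.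
Qed.

Lemma norm2_cvg0 (y : nat -> vec) (ys : vec) :
  y @ \oo --> ys -> (fun k => norm2 (y k - ys)) @ \oo --> 0.
Proof.
move=> hy.
have hc i : (fun k => (y k - ys) 0 i) @ \oo --> (0 : vec) 0 i.
  under eq_fun do rewrite !mxE; rewrite mxE -(subrr (ys 0 i)).
  by apply: cvgB; [exact: coord_cvg | exact: cvg_cst].
have hd := dotv_cvg hc hc.
have -> : 0 = Num.sqrt (dotv (0 : vec) 0).
  by rewrite /dotv big1 ?sqrtr0 // => i _; rewrite mxE mul0r.
exact: (cvg_comp _ _ hd (@sqrt_continuous R _)).
Qed.

Lemma lip_coord_cvg (y g : nat -> vec) (ys gs : vec) (L : R) :
  y @ \oo --> ys -> (forall k, norm2 (g k - gs) <= L * norm2 (y k - ys)) ->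
  forall i, (fun k => g k 0 i) @ \oo --> gs 0 i.
Proof.
move=> hy hl i.
have h0 : (fun k => g k 0 i - gs 0 i) @ \oo --> 0.
  have hn := norm2_cvg0 hy.
  have hL : (fun k => L * norm2 (y k - ys)) @ \oo --> 0.
    by have := cvgM (cvg_cst L) hn; rewrite mulr0; apply; exact: _.
  have hL' : (fun k => - (L * norm2 (y k - ys))) @ \oo --> 0.
    by rewrite -oppr0; apply: cvgN.
  have hb : \forall k \near \oo,
     - (L * norm2 (y k - ys)) <= g k 0 i - gs 0 i <= L * norm2 (y k - ys).
    apply: nearW => k.
    have h1 := coord_le_norm2 (g k - gs) i; rewrite !mxE in h1.
    have h2 := le_trans h1 (hl k).
    by rewrite -ler_norml.
  exact: (squeeze_cvgr hb hL' hL).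
have -> : gs 0 i = 0 + gs 0 i by rewrite add0r.
under eq_fun do rewrite -(subrK (gs 0 i) (g _ 0 i)).
apply: cvgD => //; exact: cvg_cst.
Qed.

End C.

Section I.
Variables (R : realType) (n : nat).
Notation vec := 'rV[R]_n.

Lemma P0_diff_z (f : vec -> R) (beta : R) (x z : vec) :
  P0 f beta x z - P0 f beta x x =
  dotv (z - x) (z - x) / 2 + beta * dotv (grad f x) (z - x).
Proof.
rewrite /P0 /vk /dotv !mulr_suml mulr_sumr -sumrB -big_split /=.
by apply: eq_bigr => i _; rewrite !mxE; field.
Qed.

Lemma P0_diff_y (f : vec -> R) (beta : R) (x y : vec) :
  P0 f beta x x - P0 f beta x y =
  (- dotv (x - y) (x - y) + 2 * beta * dotv (x - y) (grad f x)) / 2.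
Proof.
rewrite /P0 /vk /dotv mulr_sumr -sumrN -big_split /= !mulr_suml -sumrB.
by apply: eq_bigr => i _; rewrite !mxE; field.
Qed.

End I.

Theorem theorem3p4 (R : realType) (n : nat) (Om : set 'rV[R]_n)
    (f : 'rV[R]_n -> R) (L beta gamma : R) (w : nat -> R)
    (x z u : nat -> 'rV[R]_n) :
  Om !=set0 -> closed Om -> convexR Om ->
  (forall y, Om y -> differentiable f y) ->
  (exists fbar : R, forall y, Om y -> fbar <= f y) ->
  0 < L ->
  (forall y1 y2, Om y1 -> Om y2 ->
     norm2 (grad f y1 - grad f y2) <= L * norm2 (y1 - y2)) ->
  (forall k, 0 <= w k) ->
  (\sum_(k <oo) (w k)%:E < +oo)%E ->
  0 < gamma < 1 ->
  (igpm_noLS Om f L beta gamma w x z u \/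
   exists (eta alpha theta : R) (ak : nat -> R),
     igpm_LS Om f eta alpha beta theta gamma w x z u ak) ->
  forall xs : 'rV[R]_n,
    (exists phi : nat -> nat, {homo phi : i j / (i < j)%N >-> (i < j)%N} /\
        (x \o phi) @ \oo --> xs) ->
    is_proj Om (xs - beta *: grad f xs) xs.
Proof.
move=> One cO cvx dF [fbar hfb] L0 lip w0 wfin /andP[g0 g1] alg xs [phi [phi_inc cx]].
have g0' : 0 <= gamma := ltW g0.
pose B k := P0 f beta (x k) (x k) - P0 f beta (x k) (z k) + w k.
have h01 : 0 <= (1:R) <= 1 by rewrite ler01 lexx.
have [xOm b0 hip [C [C0 Cstep]]] : [/\ forall k, Om (x k), 0 < beta,
    forall k, inexact_proj Om f beta gamma (w k) (x k) (z k) (u k) &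
    exists C, 0 < C /\ forall k, f (x k.+1) <= f (x k) + C * (w k - B k)].
  case: alg => [[/andP[b0 bL] Ox0 hip hx] | [eta [alpha [theta [ak [[/andP[e0 e1] /andP[a0 a1] b0 /andP[t0 t1]] [Ox0 hip hak hx]]]]]]].
  - have xOm : forall k, Om (x k).
      by case=> [//|k]; rewrite hx; case: (hip k).
    split => //; exists (1 / beta); split; first by rewrite divr_gt0.
    move=> k; rewrite hx.
    have [Oz hd _] := ip_facts (xOm k) g0' (hip k).
    have hdesc := descent cvx (xOm k) Oz dF L0 lip h01.
    rewrite scale1r [x k + _]addrC subrK !mul1r !mulr1 in hdesc.
    have eB : w k - B k = P0 f beta (x k) (z k) - P0 f beta (x k) (x k).
      by rewrite /B; ring.
    rewrite eB P0_diff_z.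
    have hN := dotv_ge0 (z k - x k).
    have hL : L * dotv (z k - x k) (z k - x k) <= 1 / beta * dotv (z k - x k) (z k - x k).
      have hLb : L <= 1 / beta.
        by move: bL; rewrite !ler_pdivlMr // mulrC.
      by rewrite ler_wpM2r.
    have e1 : 1 / beta * (dotv (z k - x k) (z k - x k) / 2 + beta * dotv (grad f (x k)) (z k - x k))
       = 1 / beta * dotv (z k - x k) (z k - x k) / 2 + dotv (grad f (x k)) (z k - x k).
      by field; rewrite gt_eqF.
    rewrite e1.
    move: hdesc hL; move: (dotv (grad f (x k)) (z k - x k)) (dotv (z k - x k) (z k - x k)) => G N.
    move: (1 / beta * N) => NB.
    have e2 : L / 2 * N = L * N / 2 by ring.
    rewrite e2; move: (L * N) => LN; lra.
  - have ak01 k : 0 < ak k <= 1.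
      have [[i ->] _ _] := hak k.
      rewrite mulr_gt0 ?exprn_gt0 //=.
      by apply: mulr_ile1; [exact: exprn_ge0 (ltW t0) | exact: ltW | exact: exprn_ile1 (ltW t0) (ltW t1) | exact: a1].
    have xOm : forall k, Om (x k).
      elim=> [//|k IH]; rewrite hx; apply: convex_seg => //; first by case: (hip k).
      by have /andP[h1 h2] := ak01 k; rewrite ltW.
    have dz k : dotv (z k - x k) (z k - x k) / 2 + beta * dotv (grad f (x k)) (z k - x k) <= 0.
      have [Oz hd _] := ip_facts (xOm k) g0' (hip k).
      by rewrite -P0_diff_z subr_le0; rewrite subr_ge0 in hd.
    pose c := Num.min alpha (theta * (1 - eta) / (L * beta)).
    have c0 : 0 < c.
      by rewrite lt_min a0 /= divr_gt0 ?mulr_gt0 // subr_gt0.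
    have akc k : c <= ak k.
      have [[i ei] arm mx] := hak k.
      have [Oz hd _] := ip_facts (xOm k) g0' (hip k).
      case: i ei => [|j] ei.
        by rewrite ei expr0 mul1r ge_min lexx.
      set t := theta ^+ j * alpha.
      have tpos : 0 < t by rewrite mulr_gt0 ?exprn_gt0.
      have t1' : t <= 1 by apply: mulr_ile1; [exact: exprn_ge0 (ltW t0) | exact: ltW | exact: exprn_ile1 (ltW t0) (ltW t1) | exact: a1].
      have eak : ak k = theta * t by rewrite ei exprS mulrA.
      have narm : ~ armijo f eta (x k) (z k) t.
        move=> h; have := mx j h; rewrite -/t eak => h2.
        have : theta * t < t by rewrite gtr_pMl.
        by rewrite ltNge h2.
      have ht : 0 <= t <= 1 by rewrite ltW.
      have hdesc := descent cvx (xOm k) Oz dF L0 lip ht.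
      move: narm; rewrite /armijo => /negP; rewrite -ltNge => hlt.
      have hdz := dz k.
      have hN := dotv_ge0 (z k - x k).
      rewrite eak ge_min; apply/orP; right.
      rewrite ler_pdivrMr ?mulr_gt0 // -mulrA ler_pM2l //.
      rewrite leNgt; apply/negP => hc.
      move: hdesc hlt hdz hN.
      move: (f (x k + t *: (z k - x k))) (dotv (grad f (x k)) (z k - x k)) (dotv (z k - x k) (z k - x k)) => f1 G N.
      move=> hdesc hlt hdz hN.
      have i0 : 0 < t * ((1 - eta) * G + L / 2 * t * N).
        have e : t * ((1 - eta) * G + L / 2 * t * N) = t * G - eta * t * G + L / 2 * (t * t) * N by ring.
        rewrite e; lra.
      rewrite pmulr_rgt0 // in i0.
      have i2 : 0 < beta * ((1 - eta) * G + L / 2 * t * N) by rewrite mulr_gt0.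
      have e : beta * ((1 - eta) * G + L / 2 * t * N) = (1 - eta) * (beta * G) + N / 2 * (t * (L * beta)) by ring.
      rewrite e in i2.
      have j1 : (1 - eta) * (beta * G) <= (1 - eta) * (- (N / 2)).
        by apply: ler_wpM2l; [rewrite subr_ge0 ltW | lra].
      have j2 : N / 2 * (t * (L * beta)) <= N / 2 * (1 - eta).
        by apply: ler_wpM2l; [rewrite divr_ge0 | exact: ltW].
      have e3 : (1 - eta) * (- (N / 2)) + N / 2 * (1 - eta) = 0 by ring.
      lra.
    split => //; exists (eta * c / beta); split; first by rewrite !mulr_gt0 ?invr_gt0.
    move=> k; rewrite hx.
    have [_ arm _] := hak k.
    apply: (le_trans arm); rewrite lerD2l.
    have hdz := dz k.
    have hN := dotv_ge0 (z k - x k).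
    have eB : w k - B k = P0 f beta (x k) (z k) - P0 f beta (x k) (x k).
      by rewrite /B; ring.
    rewrite eB P0_diff_z.
    have hc := akc k.
    move: hdz hN hc; move: (dotv (grad f (x k)) (z k - x k)) (dotv (z k - x k) (z k - x k)) (ak k) => G N a.
    move=> hdz hN hc.
    have G0 : G <= 0.
      have : beta * G <= 0 by lra.
      by rewrite pmulr_rle0.
    have s1 : eta * a * G <= eta * c * G.
      have e : eta * a * G - eta * c * G = (eta * G) * (a - c) by ring.
      rewrite -subr_le0 e mulr_le0_ge0 ?subr_ge0 //.
      by rewrite pmulr_rle0.
    apply: (le_trans s1).
    have e : eta * c / beta * (N / 2 + beta * G) = eta * c * (N / 2 / beta) + eta * c * G.
      by field; rewrite gt_eqF.
    rewrite e lerDr mulr_ge0 ?divr_ge0 ?mulr_ge0 // ?ltW //.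
have ipk k := ip_facts (xOm k) g0' (hip k).
have Bge0 k : 0 <= B k.
  have [_ hd _] := ipk k; by rewrite /B addr_ge0.
have tele N : f (x N) <= f (x 0%N) + C * \sum_(k < N) (w k - B k).
  elim: N => [|N IH]; first by rewrite big_ord0 mulr0 addr0.
  rewrite big_ord_recr /= mulrDr addrA.
  by apply: le_trans (Cstep N) _; rewrite lerD2r.
have [W hW] := wbound w0 wfin.
pose M := (f (x 0%N) - fbar) / C + W.
have sb N : \sum_(k < N) B k <= M.
  have h1 := tele N; have h2 := hfb _ (xOm N); have h3 := hW N.
  rewrite sumrB mulrBr in h1.
  have h4 : C * \sum_(k < N) w k <= C * W by rewrite ler_pM2l.
  have e : C * M = f (x 0%N) - fbar + C * W.
    by rewrite /M; field; rewrite gt_eqF.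
  rewrite -(ler_pM2l C0) e; lra.
have B0 := bounded_sum_cvg0 Bge0 sb.
have phige k : (k <= phi k)%N.
  elim: k => [//|k IH]; apply: leq_ltn_trans IH _; exact: phi_inc.
have phioo : phi @ \oo --> \oo.
  apply/cvgnyPge => A; near=> k; apply: leq_trans (phige k).
  by near: k; exact: nbhs_infty_ge.
have Bphi : (B \o phi) @ \oo --> 0 := cvg_comp _ _ phioo B0.
have Oxs : Om xs.
  apply: (@closed_cvg _ _ _ _ (x \o phi) Om cO _ xs cx).
  by apply: nearW => k; exact: xOm.
have hl k : norm2 ((grad f \o x \o phi) k - grad f xs) <= L * norm2 ((x \o phi) k - xs).
  exact: lip _ _ (xOm (phi k)) Oxs.
have hg := lip_coord_cvg cx hl.
split => // y Oy.
pose G (v : 'rV[R]_n) := - dotv (v - y) (v - y) + 2 * beta * dotv (v - y) (grad f v).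
have hc i : (fun k => ((x \o phi) k - y) 0 i) @ \oo --> (xs - y) 0 i.
  under eq_fun do rewrite !mxE; rewrite !mxE.
  by apply: cvgB; [exact: coord_cvg | exact: cvg_cst].
have GC : (fun k => gamma / 2 * G (x (phi k))) @ \oo --> gamma / 2 * G xs.
  have h1 := dotv_cvg hc hc.
  have h2 := dotv_cvg hc hg.
  have h3 : (fun k => - dotv ((x \o phi) k - y) ((x \o phi) k - y)) @ \oo -->
             - dotv (xs - y) (xs - y).
    by have := cvgN h1; apply; exact: _.
  have h4 : (fun k => 2 * beta * dotv ((x \o phi) k - y) ((grad f \o x \o phi) k)) @ \oo -->
             2 * beta * dotv (xs - y) (grad f xs).
    by have := cvgM (cvg_cst (2 * beta)) h2; apply; exact: _.
  have h5 : (fun k => G (x (phi k))) @ \oo --> G xs.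
    by have := cvgD h3 h4; apply; exact: _.
  by have := cvgM (cvg_cst (gamma / 2)) h5; apply; exact: _.
have Gle : gamma / 2 * G xs <= 0.
  apply: (ler_cvg_to GC Bphi); apply: nearW => k.
  have [_ _ h3] := ipk (phi k).
  have h := h3 y Oy; rewrite P0_diff_y in h.
  have gw := mulr_ge0 g0' (w0 (phi k)).
  rewrite /B /G /=.
  move: h gw.
  move: (- dotv (x (phi k) - y) (x (phi k) - y) + 2 * beta * dotv (x (phi k) - y) (grad f (x (phi k)))) => Q.
  move: (P0 f beta (x (phi k)) (x (phi k)) - P0 f beta (x (phi k)) (z (phi k)) + w (phi k)) => RHS.
  move=> h gw.
  have e : gamma / 2 * Q = gamma * (Q / 2 + w (phi k)) - gamma * w (phi k) by ring.
  rewrite e; lra.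
have GxsL : G xs <= 0.
  by rewrite pmulr_rle0 ?divr_gt0 // in Gle.
rewrite norm2_le_sq.
have := P0_diff_y f beta xs y; rewrite /P0 /vk.
move: GxsL; rewrite /G; lra.
Unshelve. all: end_near. Qed.
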